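(* For fixed $r>1$ and integer $N\ge1$, the quantity $\gamma(r,K,N)$ is nondecreasing in the integer $K\ge1$, where $\gamma(r,K,N)$ is the supremum of $$\frac{p^K}{z^K}\sum_{i=1}^{K-1}\frac{z^i}{\sum_{j=i}^Kp^j}$$ over all $p=(p^1,\dots,p^K)$ with $rp^K\ge1$, $\sum_{i=1}^Kp^i=1$, $p^i>0$ for all $i$, and $z^i=(\sum_{j=1}^ip^j)^N-(\sum_{j=1}^{i-1}p^j)^N$. *)

(* Defs.v *)
From HB Require Import structures.
From mathcomp Require Import all_boot all_order all_algebra.
From mathcomp Require Import all_classical all_reals ereal.
Set Implicit Arguments. Unset Strict Implicit. Unset Printing Implicit Defensive.
Import Order.TTheory GRing.Theory Num.Theory.
Local Open Scope ring_scope.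
Local Open Scope classical_set_scope.

(* A vector p = (p^1,...,p^K) is represented by p : nat -> R; only the
   values p 1, ..., p K matter. *)

Definition psum (R : realType) (p : nat -> R) (i : nat) : R :=
  \sum_(1 <= j < i.+1) p j.

Definition zseq (R : realType) (N : nat) (p : nat -> R) (i : nat) : R :=
  psum p i ^+ N - psum p i.-1 ^+ N.

Definition objective (R : realType) (K N : nat) (p : nat -> R) : R :=
  p K / zseq N p K *
  \sum_(1 <= i < K) (zseq N p i / \sum_(i <= j < K.+1) p j).

Definition admissible (R : realType) (r : R) (K : nat) (p : nat -> R) : Prop :=
  1 <= r * p K /\ \sum_(1 <= i < K.+1) p i = 1 /\
  (forall i : nat, (1 <= i <= K)%N -> 0 < p i).

Definition gamma (R : realType) (r : R) (K N : nat) : \bar R :=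
  ereal_sup [set (objective K N p)%:E | p in admissible r K].

(* Main.v *)
Require Import Defs.
From HB Require Import structures.
From mathcomp Require Import all_boot all_order all_algebra.
From mathcomp Require Import all_classical all_reals ereal.
From mathcomp Require Import ring lra.
Set Implicit Arguments. Unset Strict Implicit.
Import Order.TTheory GRing.Theory Num.Theory.
Local Open Scope ring_scope.

Lemma psum0 (R : realType) (p : nat -> R) : psum p 0 = 0.
Proof. by rewrite /psum big_geq. Qed.

Lemma psumS (R : realType) (p : nat -> R) i : psum p i.+1 = psum p i + p i.+1.
Proof. by rewrite /psum big_nat_recr. Qed.

Definition qq (R : realType) (p : nat -> R) (e : R) (i : nat) : R :=
  if i == 1%N then e else if i == 2%N then p 1%N - e else p i.-1.

Lemma psum_qq (R : realType) (p : nat -> R) e i :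
  psum (qq p e) i.+2 = psum p i.+1.
Proof.
elim: i => [|i IH].
  rewrite !psumS !psum0 /qq /=; ring.
by rewrite psumS IH [in RHS]psumS /qq.
Qed.

Lemma zseq_qq (R : realType) N (p : nat -> R) e j :
  zseq N (qq p e) j.+3 = zseq N p j.+2.
Proof. by rewrite /zseq /= !psum_qq. Qed.

Lemma psum_ge0 (R : realType) (p : nat -> R) K i :
  (forall i : nat, (1 <= i <= K)%N -> 0 < p i) -> (i <= K)%N -> 0 <= psum p i.
Proof.
move=> hp hi; rewrite /psum big_nat_cond; apply: sumr_ge0 => j /andP[/andP[h1 h2] _].
apply: ltW; apply: hp; rewrite h1 /=; apply: leq_trans hi; by [].
Qed.

Lemma step (R : realType) (r : R) N K (p : nat -> R) :
  1 < r -> (1 <= N)%N -> (1 <= K)%N -> admissible r K p ->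
  exists q, admissible r K.+1 q /\ objective K N p <= objective K.+1 N q.
Proof.
move=> hr1 hN hK [hr [hs hp]].
have r0 : 0 < r by apply: lt_trans hr1.
have ri1 : r^-1 < 1 by rewrite invf_lt1.
have ri0 : 0 < r^-1 by rewrite invr_gt0.
set c := (1 - r^-1) / 2.
have c0 : 0 < c by rewrite /c; lra.
have c1 : c < 1 by rewrite /c; lra.
have p10 : 0 < p 1%N by apply: hp; rewrite leqnn hK.
have p11 : p 1%N <= 1.
  move: hs; rewrite big_ltn // => <-; rewrite lerDl big_nat_cond.
  apply: sumr_ge0 => j /andP[/andP[h1 h2] _]; apply: ltW; apply: hp.
  by apply/andP; split; [exact: leq_trans h1 | exact: h2].
set e := p 1%N * c.
have e0 : 0 < e by rewrite /e mulr_gt0.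
have ep : e < p 1%N by rewrite /e; nra.
have zN : (0 : R) ^+ N = 0 by rewrite expr0n eqn0Ngt hN.
have psq1 : psum (qq p e) 1 = e by rewrite psumS psum0 add0r.
have psp1 : psum p 1 = p 1%N by rewrite psumS psum0 add0r.
have eNp : e ^+ N <= p 1%N ^+ N.
  by apply: lerXn2r; rewrite ?nnegrE ?ltW.
exists (qq p e); split.
  split; last split.
  - case: K hK hs hr {hp p10 p11 ep eNp} => [//|[|k]] _ hs hr.
      rewrite big_nat1 in hs.
      rewrite /qq /= hs /e /c; rewrite ?mul1r.
      idtac.
      have rr : r * r^-1 = 1 by rewrite mulfV // gt_eqF.
      nra.
    by rewrite /qq /=.
  - case: K hK hs {hr hp p10 p11 ep eNp} => [//|k] _ hs.
    change (psum (qq p e) k.+2 = 1); rewrite psum_qq; exact: hs.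
  - move=> [|[|[|i]]] //= hi; rewrite /qq /=.
    + by rewrite subr_gt0.
    + by apply: hp.
case: K hK hs hr hp => [//|[|k]] _ hs hr hp.
  rewrite /objective big_geq // mulr0 big_nat1.
  have hz2 : zseq N (qq p e) 2 = p 1%N ^+ N - e ^+ N.
    by rewrite /zseq /= psum_qq psp1 psq1.
  apply: mulr_ge0; apply: divr_ge0.
  - by rewrite /qq /= subr_ge0 ltW.
  - by rewrite hz2 subr_ge0.
  - by rewrite /zseq /= psq1 psum0 zN subr0 exprn_ge0 // ltW.
  - change (0 <= psum (qq p e) 2); rewrite psum_qq psp1 ltW //.
rewrite /objective.
have -> : qq p e k.+3 = p k.+2 by rewrite /qq.
rewrite zseq_qq.
have pk : 0 < p k.+2 by apply: hp; rewrite leqnn.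
have ps1 : 0 <= psum p k.+1 by apply: (psum_ge0 hp).
apply: ler_wpM2l.
  apply: divr_ge0; first exact: ltW pk.
  rewrite /zseq /= (psumS p k.+1) subr_ge0; apply: lerXn2r.
  - by rewrite nnegrE.
  - by rewrite nnegrE addr_ge0 // ltW.
  - by rewrite lerDl ltW.
set G := fun i => zseq N p i / \sum_(i <= j < k.+3) p j.
set F := fun i => zseq N (qq p e) i / \sum_(i <= j < k.+4) qq p e j.
have eL : \sum_(1 <= i < k.+2) G i = G 1%N + \sum_(2 <= i < k.+2) G i.
  by rewrite big_ltn.
have eR : \sum_(1 <= i < k.+3) F i = F 1%N + (F 2%N + \sum_(2 <= i < k.+2) F i.+1).
  by rewrite big_ltn // big_add1 /= big_ltn.
rewrite eL eR addrA.
have -> : \sum_(2 <= i < k.+2) F i.+1 = \sum_(2 <= i < k.+2) G i.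
  apply: eq_big_nat => -[|[|j]] // hj.
  rewrite /F /G zseq_qq big_add1 /=; congr (_ / _).
  by apply: eq_big_nat => -[|[|t]] // ht; rewrite /qq.
rewrite lerD2r.
have htot : \sum_(1 <= j < k.+4) qq p e j = 1.
  change (psum (qq p e) k.+3 = 1); rewrite psum_qq; exact: hs.
have hrest : \sum_(2 <= j < k.+4) qq p e j = 1 - e.
  move: htot; rewrite big_ltn // => <-; rewrite /qq /=. by rewrite [e + _]addrC addrK.
rewrite /F /G hrest htot hs.
have -> : zseq N p 1 = p 1%N ^+ N by rewrite /zseq /= psp1 psum0 zN subr0.
have -> : zseq N (qq p e) 1 = e ^+ N by rewrite /zseq /= psq1 psum0 zN subr0.
have -> : zseq N (qq p e) 2 = p 1%N ^+ N - e ^+ N.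
  by rewrite /zseq /= psum_qq psp1 psq1.
rewrite !divr1.
have x0 : 0 <= p 1%N ^+ N - e ^+ N by rewrite subr_ge0.
have e1 : 0 < 1 - e by lra.
have hx : p 1%N ^+ N - e ^+ N <= (p 1%N ^+ N - e ^+ N) / (1 - e).
  by apply: ler_peMr => //; rewrite invf_ge1 //; lra.
move: hx; set y := _ / (1 - e); lra.
Qed.

Lemma gamma_step (R : realType) (r : R) N K :
  1 < r -> (1 <= N)%N -> (1 <= K)%N -> (gamma r K N <= gamma r K.+1 N)%E.
Proof.
move=> hr hN hK; apply: ge_ereal_sup => x [p hp <-].
have [q [hq hle]] := step hr hN hK hp.
apply: (@le_trans _ _ (objective K.+1 N q)%:E); first by rewrite lee_fin.
by apply: ereal_sup_ubound; exists q.
Qed.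

Theorem lemma3 (R : realType) (r : R) (N K1 K2 : nat) :
  1 < r -> (1 <= N)%N -> (1 <= K1)%N -> (K1 <= K2)%N ->
  (gamma r K1 N <= gamma r K2 N)%E.
Proof.
move=> hr hN hK1; elim: K2 => [|K2 IH] h.
  by move: hK1; rewrite leqn0 in h; rewrite (eqP h).
move: h; rewrite leq_eqVlt => /orP[/eqP -> //|h].
apply: le_trans (IH h) _; apply: gamma_step => //.
exact: leq_trans hK1 h.
Qed.
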